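(* Let $P$ be an NL poset on $X_n$ whose twin classes $\alpha_1,\ldots,\alpha_r$ all have the same size $m\ge1$. Then $H=\mathrm{Aut}(P_\equiv)$, where $H=\{\psi\in\mathrm{Aut}(P_\equiv): |\psi(\alpha)|=|\alpha| \text{ for every twin class }\alpha\}$. Moreover, $\mathrm{Aut}(P)\cong\mathrm{Aut}(P_\equiv)$ if and only if $m=1$, i.e., every twin class is a singleton.
   Context: Let $X_n=\{0,1,\ldots,n-1\}$. A naturally labeled (NL) poset on $X_n$ is a partial order $\preceq$ on $X_n$ such that $x\preceq y$ implies $x\le y$ in the usual integer order. $\mathrm{Aut}(P)$ is the group of bijections $\sigma$ of $X_n$ with $x\preceq y\iff\sigma(x)\preceq\sigma(y)$. For $x\in X_n$, $D(x)=\{z: z\prec x\}$, $U(x)=\{z: x\prec z\}$; $x,y$ are twins if $D(x)=D(y)$ and $U(x)=U(y)$, and the equivalence classes are the twin classes. The twin poset $P_\equiv$ is the set of twin classes ordered by $\alpha\preceq_\equiv\beta$ iff $x\preceq y$ for (any) $x\in\alpha$, $y\in\beta$; $\mathrm{Aut}(P_\equiv)$ is its automorphism group. *)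

(* Defs.v *)
From mathcomp Require Import all_boot all_fingroup.
Set Implicit Arguments. Unset Strict Implicit. Unset Printing Implicit Defensive.

(* X_n = 'I_n ; a partial order is given by a boolean relation le. *)
Section Poset.
Variable n : nat.
Variable le : rel 'I_n.

Definition NLposet : Prop :=
  [/\ reflexive le, antisymmetric le, transitive le &
      forall x y : 'I_n, le x y -> (x <= y)%N].

Definition downset (x : 'I_n) : {set 'I_n} := [set z | le z x & z != x].
Definition upset (x : 'I_n) : {set 'I_n} := [set z | le x z & z != x].

Definition twins (x y : 'I_n) : bool := (downset x == downset y) && (upset x == upset y).

Definition twin_class (x : 'I_n) : {set 'I_n} := [set y | twins x y].

(* the set of twin classes = carrier of the twin poset P_≡ *)
Definition twin_classes : {set {set 'I_n}} := [set twin_class x | x in 'I_n].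

(* order of P_≡ : alpha ≼ beta iff x ≼ y for (any, equivalently some) x in alpha, y in beta *)
Definition twin_le (a b : {set 'I_n}) : bool := [exists x in a, exists y in b, le x y].

Definition AutP : {set {perm 'I_n}} :=
  [set s : {perm 'I_n} | [forall x, forall y, le x y == le (s x) (s y)]].

(* Aut(P_≡): bijections of the set of twin classes preserving the twin order,
   represented as permutations of {set 'I_n} supported on twin_classes *)
Definition AutPeq : {set {perm {set 'I_n}}} :=
  [set psi : {perm {set 'I_n}} | perm_on twin_classes psi &&
     [forall a in twin_classes, forall b in twin_classes,
        twin_le a b == twin_le (psi a) (psi b)]].

Definition AutPeq_size : {set {perm {set 'I_n}}} :=
  [set psi in AutPeq | [forall a in twin_classes, #|psi a| == #|a|]].
End Poset.

(* Main.v *)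
Require Import Defs.
From mathcomp Require Import all_boot all_fingroup.
Set Implicit Arguments. Unset Strict Implicit. Unset Printing Implicit Defensive.

Definition mkperm (T : finType) (g : T -> T) : {perm T} :=
  insubd (1%g : {perm T}) [ffun x => g x].

Lemma mkpermE (T : finType) (g : T -> T) : injective g -> forall x, mkperm g x = g x.
Proof.
move=> ig x; rewrite /mkperm.
have h : injectiveb [ffun x => g x].
  by apply/injectiveP=> a b; rewrite !ffunE; apply: ig.
by rewrite unlock /= insubdK // ffunE.
Qed.

Section Tw.
Variables (n : nat) (le : rel 'I_n).
Hypothesis hP : NLposet le.
Local Notation tc := (twin_class le).
Local Notation TC := (twin_classes le).

Lemma twins_refl x : twins le x x.
Proof. by rewrite /twins !eqxx. Qed.

Lemma tcP x y : (y \in tc x) = (tc x == tc y).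
Proof.
rewrite {1}/twin_class inE; apply/idP/eqP.
  case/andP=> /eqP d /eqP u; apply/setP=> z; rewrite /twin_class !inE /twins d u //.
move=> e; have: y \in tc y by rewrite /twin_class inE twins_refl.
by rewrite -e /twin_class inE.
Qed.

Lemma tc_self x : x \in tc x.
Proof. by rewrite tcP. Qed.

Lemma twinsE x y : twins le x y = (tc x == tc y).
Proof. by rewrite -tcP inE. Qed.

Lemma TCP A : reflect (exists x, A = tc x) (A \in TC).
Proof. by apply: (iffP imsetP) => [[x _ ->]|[x ->]]; exists x. Qed.

Lemma leE x y : le x y = (x == y) || ((tc x != tc y) && twin_le le (tc x) (tc y)).
Proof.
case: hP => refl anti trans _.
have dn a b : tc a = tc b -> downset le a = downset le b.
  by move/eqP; rewrite -twinsE => /andP[/eqP ->].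
have up a b : tc a = tc b -> upset le a = upset le b.
  by move/eqP; rewrite -twinsE => /andP[_ /eqP ->].
apply/idP/idP.
  move=> lxy; case: eqP => //= /eqP nxy; apply/andP; split.
    apply/eqP=> e; have: x \in downset le y by rewrite inE lxy nxy.
    by rewrite -(dn _ _ e) inE eqxx andbF.
  by apply/existsP; exists x; rewrite tc_self /=; apply/existsP; exists y; rewrite tc_self.
case/orP=> [/eqP -> | /andP[ne /existsP[x' /andP[xx' /existsP[y' /andP[yy' l]]]]]].
  exact: refl.
move: xx' yy'; rewrite !tcP => /eqP ex /eqP ey.
have nxy' : x' != y' by apply: contraNneq ne => e; rewrite ex ey e.
have : x' \in downset le y' by rewrite inE l nxy'.
rewrite -(dn _ _ ey) inE => /andP[l2 n2].
have : y \in upset le x' by rewrite inE l2 eq_sym n2.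
by rewrite -(up _ _ ex) inE => /andP[].
Qed.


Variable m : nat.
Hypothesis hm : forall a, a \in TC -> #|a| = m.

Definition gpsi (psi : {perm {set 'I_n}}) (x : 'I_n) : 'I_n :=
  nth x (enum (psi (tc x))) (index x (enum (tc x))).

Section Psi.
Variable psi : {perm {set 'I_n}}.
Hypothesis hpsi : psi \in AutPeq le.

Lemma psi_on : perm_on TC psi.
Proof. by move: hpsi; rewrite inE => /andP[]. Qed.

Lemma psi_le a b : a \in TC -> b \in TC -> twin_le le a b = twin_le le (psi a) (psi b).
Proof.
move: hpsi; rewrite inE => /andP[_ /forallP h] aT bT.
by move: (h a); rewrite aT /= => /forallP /(_ b); rewrite bT /= => /eqP.
Qed.

Lemma tcTC x : tc x \in TC.
Proof. by apply/TCP; exists x. Qed.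

Lemma psiTC x : psi (tc x) \in TC.
Proof. by rewrite (perm_closed _ psi_on) tcTC. Qed.

Lemma g_in x : gpsi psi x \in psi (tc x).
Proof.
rewrite /gpsi -mem_enum; apply: mem_nth.
by rewrite -cardE hm ?psiTC // -(hm (tcTC x)) cardE index_mem mem_enum tc_self.
Qed.

Lemma tc_g x : tc (gpsi psi x) = psi (tc x).
Proof.
have [w ew] := TCP _ (psiTC x).
by have := g_in x; rewrite ew tcP => /eqP ->.
Qed.

Lemma g_inj : injective (gpsi psi).
Proof.
move=> x y e.
have ec : tc x = tc y by apply: (@perm_inj _ psi); rewrite -!tc_g e.
have hx : x \in enum (tc y) by rewrite mem_enum -ec tc_self.
have hy : y \in enum (tc y) by rewrite mem_enum tc_self.
have sz z : z \in tc y -> index z (enum (tc y)) < size (enum (psi (tc y))).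
  by move=> zi; rewrite -cardE hm ?psiTC // -(hm (tcTC y)) cardE index_mem mem_enum.
move: e; rewrite /gpsi ec (set_nth_default y) ?sz -?ec ?tc_self // ec => /eqP.
rewrite nth_uniq ?enum_uniq ?sz ?tc_self -?ec ?tc_self // => /eqP ei.
by rewrite ec in ei; rewrite -(nth_index y hx) ei (nth_index y hy).
Qed.

Lemma g_le x y : le (gpsi psi x) (gpsi psi y) = le x y.
Proof.
rewrite (leE (gpsi psi x)) (leE x) !tc_g (inj_eq g_inj) (inj_eq (@perm_inj _ psi)).
by rewrite -psi_le ?tcTC.
Qed.

End Psi.

Definition Phi psi := mkperm (gpsi psi).

Lemma PhiE psi : psi \in AutPeq le -> forall x, Phi psi x = gpsi psi x.
Proof. by move=> h; apply: mkpermE; apply: g_inj. Qed.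

Lemma Phi_AutP psi : psi \in AutPeq le -> Phi psi \in AutP le.
Proof.
move=> h; rewrite inE; apply/forallP=> x; apply/forallP=> y.
by rewrite !PhiE // g_le.
Qed.

Lemma Phi_inj : {in AutPeq le &, injective Phi}.
Proof.
move=> psi phi hp hq e; apply/permP => A.
case: (boolP (A \in TC)) => [/TCP[x ->]| nA]; last first.
  by rewrite (out_perm (psi_on hp)) // (out_perm (psi_on hq)).
by rewrite -(tc_g hp) -(tc_g hq) -!PhiE // e.
Qed.

Lemma card_le : #|AutPeq le| <= #|AutP le|.
Proof.
rewrite -(card_in_imset Phi_inj); apply: subset_leq_card.
by apply/subsetP => s /imsetP[psi hp ->]; apply: Phi_AutP.
Qed.

Lemma card_lt : 0 < n -> 2 <= m -> #|AutPeq le| < #|AutP le|.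
Proof.
move=> n0 m2; pose x := Ordinal n0.
have c : #|tc x| = #|tc x :\ x|.+1 by rewrite (cardsD1 x) tc_self.
have : 0 < #|tc x :\ x| by rewrite -ltnS -c hm ?tcTC.
case/card_gt0P => y; rewrite !inE => /andP[nyx yx].
have exy : tc x = tc y by apply/eqP; rewrite -twinsE.
have tct z : tc (tperm x y z) = tc z.
  by case: (tpermP x y z) => [->|->|_ _]; rewrite ?exy.
have tA : tperm x y \in AutP le.
  rewrite inE; apply/forallP=> a; apply/forallP=> b.
  by rewrite (leE (tperm x y a)) (leE a) !tct (inj_eq (@perm_inj _ _)).
have tN : tperm x y \notin Phi @: AutPeq le.
  apply/imsetP=> [[psi hp e]].
  have fx : psi (tc x) = tc x by rewrite -(tc_g hp) -PhiE // -e tct.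
  have : tperm x y x = x by rewrite e PhiE // /gpsi fx nth_index // mem_enum tc_self.
  by rewrite tpermL => /eqP; rewrite (negbTE nyx).
rewrite -(card_in_imset Phi_inj); have := cardsU1 (tperm x y) (Phi @: AutPeq le); rewrite tN add1n => <-.
apply: subset_leq_card; apply/subsetP => s /setU1P[->//|/imsetP[psi hp ->]].
exact: Phi_AutP.
Qed.


Lemma AutPP s : s \in AutP le -> forall x y, le (s x) (s y) = le x y.
Proof. by rewrite inE => /forallP h x y; move: (h x) => /forallP /(_ y) /eqP. Qed.

Lemma gAutP : group_set (AutP le).
Proof.
apply/group_setP; split.
  by rewrite inE; apply/forallP=> x; apply/forallP=> y; rewrite !perm1.
move=> s t hs ht; rewrite inE; apply/forallP=> x; apply/forallP=> y.
by rewrite !permM (AutPP ht) (AutPP hs).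
Qed.

Lemma gAutPeq : group_set (AutPeq le).
Proof.
apply/group_setP; split.
  rewrite inE perm_on1 /=; apply/forallP=> a; apply/implyP=> _.
  by apply/forallP=> b; apply/implyP=> _; rewrite !perm1.
move=> s t hs ht; rewrite inE perm_onM ?psi_on //=.
apply/forallP=> a; apply/implyP=> aT; apply/forallP=> b; apply/implyP=> bT.
rewrite !permM (psi_le hs) // (psi_le ht) // (perm_closed _ (psi_on hs)) //.
Qed.

Section M1.
Hypothesis m1 : m = 1.

Lemma tc1 x : tc x = [set x].
Proof.
have /cards1P [w ew] : #|tc x| == 1 by rewrite hm ?tcTC ?m1.
by have := tc_self x; rewrite ew inE => /eqP <-.
Qed.

Lemma TC1 x : [set x] \in TC.
Proof. by rewrite -tc1 tcTC. Qed.

Definition rhof (s : {perm 'I_n}) A := if A \in TC then s @: A else A.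

Lemma rhof_inj s : injective (rhof s).
Proof.
have key A : A \in TC -> exists x, A = [set x].
  by case/TCP=> x ->; exists x; rewrite tc1.
move=> A B; rewrite /rhof.
case: (boolP (A \in TC)) => [/key [x ->] | nA]; case: (boolP (B \in TC)) => [/key [y ->] | nB] //.
- by rewrite !imset_set1 => /set1_inj /perm_inj ->.
- by rewrite imset_set1 => e; rewrite -e TC1 in nB.
- by rewrite imset_set1 => e; rewrite e TC1 in nA.
Qed.

Definition rho s := mkperm (rhof s).

Lemma rho1 s x : rho s [set x] = [set s x].
Proof. rewrite mkpermE; last exact: rhof_inj.
by rewrite /rhof TC1 imset_set1. Qed.

Lemma rho_out s A : A \notin TC -> rho s A = A.
Proof. move=> nA; rewrite mkpermE; last exact: rhof_inj.
by rewrite /rhof (negbTE nA). Qed.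

Lemma rho_morph : {in [set: {perm 'I_n}] &, {morph rho : s t / (s * t)%g}}.
Proof.
move=> s t _ _; apply/permP=> A; rewrite permM.
case: (boolP (A \in TC)) => [/TCP[x ->] | nA]; last by rewrite !rho_out.
by rewrite tc1 !rho1 permM.
Qed.

Lemma rho_inj : injective rho.
Proof.
move=> s t e; apply/permP=> x.
by move: (rho1 s x); rewrite e rho1 => /set1_inj.
Qed.

Lemma twin_le1 a b : twin_le le [set a] [set b] = le a b.
Proof.
apply/existsP/idP => [[x /andP[/set1P -> /existsP[y /andP[/set1P -> //]]]] | l].
by exists a; rewrite set11 /=; apply/existsP; exists b; rewrite set11.
Qed.

Lemma rho_in s : s \in AutP le -> rho s \in AutPeq le.
Proof.
move=> hs; rewrite inE; apply/andP; split.
  apply/subsetP=> A; rewrite inE; apply: contraR => nA; by rewrite rho_out.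
apply/forallP=> a; apply/implyP=> /TCP[x ->]; apply/forallP=> b; apply/implyP=> /TCP[y ->].
by rewrite !tc1 !rho1 !twin_le1 (AutPP hs).
Qed.

End M1.
End Tw.

Theorem proposition4p9 (n : nat) (le : rel 'I_n) (m : nat) :
  NLposet le -> (0 < n)%N -> (1 <= m)%N ->
  (forall a, a \in twin_classes le -> #|a| = m) ->
  AutPeq_size le = AutPeq le /\
  ((AutP le \isog AutPeq le) <-> m = 1%N).
Proof.
move=> hP n0 m0 hm.
split.
  apply/setP=> psi; rewrite inE; case: (boolP (psi \in AutPeq le)) => //= hp.
  apply/forallP=> a; apply/implyP=> aT.
  by rewrite hm ?(perm_closed _ (psi_on hp)) // hm.
split.
  move=> iso; apply/eqP; rewrite eqn_leq m0 andbT leqNgt; apply/negP=> m2.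
  have := card_isog (G := Group (gAutP le)) (H := Group (gAutPeq le)) iso.
  by move=> e; have := card_lt hP hm n0 m2; rewrite e ltnn.
move=> m1.
pose f := @Morphism _ _ [set: {perm 'I_n}] (rho le) (rho_morph hm m1).
have injf : ('injm f)%g by apply/injmP=> s t _ _; exact: (rho_inj hm m1).
have sub : (f @* AutP le)%g = AutPeq le.
  apply/eqP; rewrite eqEcard; apply/andP; split.
    rewrite morphimEsub ?subsetT //; apply/subsetP=> p /imsetP[s hs ->].
    exact: (rho_in hm m1).
  by rewrite card_injm ?subsetT // (card_le hP hm).
by rewrite -sub; apply: sub_isog => //; apply: subsetT.
Qed.
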